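(* Let $B\in\mathbb{C}^{n\times n}$ be nonzero of rank $r$ with Hartwig–Spindelböck decomposition $B=U\begin{bmatrix}\Sigma K&\Sigma L\\0&0\end{bmatrix}U^*$, let $T\in\mathbb{C}^{r\times r}$ be idempotent, and let $A=U\begin{bmatrix}(\Sigma^{-1}T)^\dagger K&(\Sigma^{-1}T)^\dagger L\\0&0\end{bmatrix}U^*$, so that $A\le^{\diamond}B$. Then $A^\dagger\le^{\diamond}B^\dagger$ if and only if $T(T^*-I_r)\Sigma^{-2}T=0$.
   Context: $M^*$ is the conjugate transpose, $M^\dagger$ the Moore–Penrose inverse, $\mathcal{R}(M)$ the column space. Hartwig–Spindelböck decomposition: every $B\in\mathbb{C}^{n\times n}$ of rank $r>0$ can be written $B=U\begin{bmatrix}\Sigma K&\Sigma L\\0&0\end{bmatrix}U^*$ with $U$ unitary, $\Sigma\in\mathbb{C}^{r\times r}$ the positive diagonal matrix of nonzero singular values of $B$, $K\in\mathbb{C}^{r\times r}$, $L\in\mathbb{C}^{r\times(n-r)}$ with $KK^*+LL^*=I_r$. Diamond order: $X\le^{\diamond}Y$ iff $\mathcal{R}(X)\subseteq\mathcal{R}(Y)$, $\mathcal{R}(X^* )\subseteq\mathcal{R}(Y^* )$, and $XY^*X=XX^*X$. *)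

(* Defs.v *)
From Stdlib Require Import ClassicalEpsilon.
From mathcomp Require Import all_boot all_order all_algebra.
Set Implicit Arguments. Unset Strict Implicit. Unset Printing Implicit Defensive.
Import Order.TTheory GRing.Theory Num.Theory.
Local Open Scope ring_scope.

Definition ctmx (C : numClosedFieldType) (m n : nat) (M : 'M[C]_(m, n)) : 'M[C]_(n, m) :=
  map_mx Num.conj M^T.

Definition penrose (C : numClosedFieldType) (m n : nat)
  (M : 'M[C]_(m, n)) (X : 'M[C]_(n, m)) : Prop :=
  [/\ M *m X *m M = M, X *m M *m X = X,
      ctmx (M *m X) = M *m X & ctmx (X *m M) = X *m M].

(* Moore-Penrose inverse M^dagger: the (unique, always existing) solution of
   the Penrose equations, chosen by Hilbert's epsilon. *)
Definition mpinv (C : numClosedFieldType) (m n : nat) (M : 'M[C]_(m, n)) : 'M[C]_(n, m) :=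
  epsilon (inhabits 0) (penrose M).

(* Column space inclusion R(X) ⊆ R(Y): column space of X = row space of X^T. *)
Definition colsub (C : numClosedFieldType) (m n p : nat)
  (X : 'M[C]_(m, n)) (Y : 'M[C]_(m, p)) : bool := (X^T <= Y^T)%MS.

Definition diamond_le (C : numClosedFieldType) (m n : nat) (X Y : 'M[C]_(m, n)) : Prop :=
  [/\ colsub X Y, colsub (ctmx X) (ctmx Y) & X *m ctmx Y *m X = X *m ctmx X *m X].

(* Main.v *)
Require Import Defs.
From Stdlib Require Import ClassicalEpsilon.
From mathcomp Require Import all_boot all_order all_algebra.
Import Order.TTheory GRing.Theory Num.Theory.
Local Open Scope ring_scope.
Set Implicit Arguments. Unset Strict Implicit. Unset Printing Implicit Defensive.

Section CT.
Context {C : numClosedFieldType}.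

Lemma ctmxM m n p (A : 'M[C]_(m, n)) (B : 'M[C]_(n, p)) :
  ctmx (A *m B) = ctmx B *m ctmx A.
Proof. by rewrite /ctmx trmx_mul map_mxM. Qed.

Lemma ctmxK m n (A : 'M[C]_(m, n)) : ctmx (ctmx A) = A.
Proof. by apply/matrixP=> i j; rewrite /ctmx !mxE conjCK. Qed.

Lemma ctmxD m n (A B : 'M[C]_(m, n)) : ctmx (A + B) = ctmx A + ctmx B.
Proof. by apply/matrixP=> i j; rewrite /ctmx !mxE rmorphD. Qed.

Lemma ctmxN m n (A : 'M[C]_(m, n)) : ctmx (- A) = - ctmx A.
Proof. by apply/matrixP=> i j; rewrite /ctmx !mxE rmorphN. Qed.

Lemma ctmx0 m n : ctmx (0 : 'M[C]_(m, n)) = 0.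
Proof. by apply/matrixP=> i j; rewrite /ctmx !mxE rmorph0. Qed.

Lemma ctmx1 n : ctmx (1%:M : 'M[C]_n) = 1%:M.
Proof. by apply/matrixP=> i j; rewrite /ctmx !mxE eq_sym; case: eqP; rewrite ?rmorph1 ?rmorph0. Qed.

Lemma ctmxV n (A : 'M[C]_n) : ctmx (invmx A) = invmx (ctmx A).
Proof. by rewrite /ctmx trmx_inv map_invmx. Qed.

Lemma ctmx_eq0 m n (A : 'M[C]_(m, n)) : A *m ctmx A = 0 -> A = 0.
Proof.
move=> H; apply/matrixP=> i j; rewrite mxE.
have := congr1 (fun M : 'M[C]_(m, m) => M i i) H; rewrite !mxE => /eqP.
rewrite psumr_eq0; last by move=> k _; rewrite /ctmx !mxE mul_conjC_ge0.
move/allP/(_ j (mem_index_enum _))/implyP/(_ isT).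
by rewrite /ctmx !mxE mul_conjC_eq0 => /eqP.
Qed.

Lemma mxrank_ctmx m n (A : 'M[C]_(m, n)) : \rank (ctmx A) = \rank A.
Proof. by rewrite /ctmx mxrank_map mxrank_tr. Qed.

Lemma gram_unit {k m} (H : 'M[C]_(k, m)) : row_free H -> H *m ctmx H \in unitmx.
Proof.
move=> fH; rewrite -row_free_unit -kermx_eq0.
set X := kermx _.
have h : X *m (H *m ctmx H) = 0 by exact: mulmx_ker.
have : (X *m H) *m ctmx (X *m H) = 0.
  by rewrite ctmxM mulmxA -(mulmxA X) h mul0mx.
by move/ctmx_eq0/eqP; rewrite mulmx_free_eq0.
Qed.

Lemma mp_fact m n k (F : 'M[C]_(m, k)) (G : 'M[C]_(k, n)) :
  G *m ctmx G \in unitmx -> ctmx F *m F \in unitmx ->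
  penrose (F *m G) (ctmx G *m invmx (G *m ctmx G) *m invmx (ctmx F *m F) *m ctmx F).
Proof.
move=> uG uF.
have e1 : F *m G *m (ctmx G *m invmx (G *m ctmx G) *m invmx (ctmx F *m F) *m ctmx F)
   = F *m invmx (ctmx F *m F) *m ctmx F.
  by rewrite -!mulmxA (mulmxA G) mulKVmx.
have e2 : (ctmx G *m invmx (G *m ctmx G) *m invmx (ctmx F *m F) *m ctmx F) *m (F *m G)
   = ctmx G *m invmx (G *m ctmx G) *m G.
  by rewrite !mulmxA -(mulmxA (_ *m invmx (ctmx F *m F)) (ctmx F) F) mulmxKV.
split.
- by rewrite e1 mulmxA -(mulmxA (F *m invmx (ctmx F *m F))) mulmxKV.
- by rewrite e2 !mulmxA -(mulmxA (ctmx G *m invmx (G *m ctmx G)) G (ctmx G)) mulmxKV.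
- by rewrite e1 !ctmxM ctmxK ctmxV ctmxM ctmxK mulmxA.
- by rewrite e2 !ctmxM ctmxK ctmxV ctmxM ctmxK mulmxA.
Qed.

Lemma mp_exists m n (M : 'M[C]_(m, n)) : exists X, penrose M X.
Proof.
have fG : row_free (row_base M) by exact: row_base_free.
have fF : row_free (ctmx (col_base M)).
  by rewrite /row_free mxrank_ctmx; apply: col_base_full.
have uG : row_base M *m ctmx (row_base M) \in unitmx by apply: gram_unit.
have uF : ctmx (col_base M) *m col_base M \in unitmx.
  by rewrite -{2}(ctmxK (col_base M)); apply: gram_unit.
by have := mp_fact uG uF; rewrite mulmx_base => h; eexists; exact: h.
Qed.

Lemma mp_unique m n (M : 'M[C]_(m, n)) X Y : penrose M X -> penrose M Y -> X = Y.
Proof.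
case=> hx1 hx2 hx3 hx4 [hy1 hy2 hy3 hy4].
have h1 : X = X *m ctmx X *m ctmx M by rewrite -mulmxA -ctmxM hx3 mulmxA hx2.
have h2 : ctmx M = ctmx M *m (ctmx Y *m ctmx M) by rewrite -!ctmxM hy1.
have hX : X = X *m M *m Y.
  have -> : X *m M *m Y = X *m ctmx (M *m X) *m ctmx (M *m Y) by rewrite hx3 hy3 !mulmxA hx2.
  by rewrite !ctmxM -!mulmxA -h2 mulmxA -h1.
have h1' : Y = ctmx M *m ctmx Y *m Y by rewrite -ctmxM hy4 hy2.
have h2' : ctmx M = ctmx M *m ctmx X *m ctmx M by rewrite -!ctmxM mulmxA hx1.
have hY : Y = X *m M *m Y.
  have -> : X *m M *m Y = ctmx (X *m M) *m ctmx (Y *m M) *m Y.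
    by rewrite hx4 hy4 -(mulmxA (X *m M)) hy2.
  by rewrite !ctmxM !mulmxA -h2' -h1'.
by rewrite hX -hY.
Qed.

Lemma mpinvP m n (M : 'M[C]_(m, n)) : penrose M (mpinv M).
Proof. by rewrite /mpinv; apply: epsilon_spec; apply: mp_exists. Qed.

Lemma mpinvE m n (M : 'M[C]_(m, n)) X : penrose M X -> mpinv M = X.
Proof. by move=> h; apply: (mp_unique (mpinvP M) h). Qed.

Lemma penrose_sym m n (M : 'M[C]_(m, n)) X : penrose M X -> penrose X M.
Proof. by case=> *; split. Qed.

Lemma pen_conj p q k (W : 'M[C]_(p, k)) (V : 'M[C]_(k, q)) (Q R : 'M[C]_k) :
  ctmx W *m W = 1%:M -> V *m ctmx V = 1%:M -> penrose Q R ->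
  penrose (W *m Q *m V) (ctmx V *m R *m ctmx W).
Proof.
move=> hW hV [hQ1 hQ2 hQ3 hQ4].
have eAX : W *m Q *m V *m (ctmx V *m R *m ctmx W) = W *m (Q *m R) *m ctmx W.
  by rewrite -!mulmxA (mulmxA V) hV mul1mx !mulmxA.
have eXA : ctmx V *m R *m ctmx W *m (W *m Q *m V) = ctmx V *m (R *m Q) *m V.
  by rewrite -!mulmxA (mulmxA (ctmx W)) hW mul1mx !mulmxA.
split.
- by rewrite -[in RHS]hQ1 -!mulmxA (mulmxA V) hV mul1mx (mulmxA (ctmx W)) hW mul1mx.
- by rewrite -[in RHS]hQ2 -!mulmxA (mulmxA (ctmx W)) hW mul1mx (mulmxA V) hV mul1mx.
- by rewrite eAX ctmxM ctmxK ctmxM hQ3 mulmxA.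
- by rewrite eXA ctmxM ctmxM hQ4 ctmxK mulmxA.
Qed.

Lemma ctmx_col m1 m2 n (A : 'M[C]_(m1, n)) (B : 'M[C]_(m2, n)) :
  ctmx (col_mx A B) = row_mx (ctmx A) (ctmx B).
Proof. by rewrite /ctmx tr_col_mx map_row_mx. Qed.

Lemma ctmx_row m n1 n2 (A : 'M[C]_(m, n1)) (B : 'M[C]_(m, n2)) :
  ctmx (row_mx A B) = col_mx (ctmx A) (ctmx B).
Proof. by rewrite /ctmx tr_row_mx map_col_mx. Qed.
End CT.

(* n = r + s; B = U [ΣK ΣL; 0 0] U^* is a Hartwig–Spindelböck decomposition. *)
Theorem theorem5p5 (C : numClosedFieldType) (r s : nat)
  (B U : 'M[C]_(r + s)) (d : 'rV[C]_r) (K : 'M[C]_r) (L : 'M[C]_(r, s))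
  (T : 'M[C]_r) :
  (0 < r)%N ->
  \rank B = r ->
  U *m ctmx U = 1%:M ->
  (forall i, 0 < d 0 i) ->
  K *m ctmx K + L *m ctmx L = 1%:M ->
  B = U *m block_mx (diag_mx d *m K) (diag_mx d *m L) 0 0 *m ctmx U ->
  T *m T = T ->
  let Sigma := diag_mx d in
  let P := mpinv (invmx Sigma *m T) in
  let A := U *m block_mx (P *m K) (P *m L) 0 0 *m ctmx U in
  diamond_le (mpinv A) (mpinv B) <->
  T *m (ctmx T - 1%:M) *m (invmx Sigma *m invmx Sigma) *m T = 0.
Proof.
move=> r0 rk hU hd hKL hB hT Sigma P A.
set E : 'M[C]_(r + s, r) := col_mx 1%:M 0.
set Mr := row_mx K L.
have blk Q : block_mx (Q *m K) (Q *m L) 0 0 = E *m Q *m Mr.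
  by rewrite /E /Mr mul_col_mx mul1mx mul0mx mul_col_mx mul_mx_row mul0mx block_mxEv row_mx0.
have hUU : ctmx U *m U = 1%:M by apply: mulmx1C.
set W := U *m E. set V := Mr *m ctmx U.
have hW : ctmx W *m W = 1%:M.
  rewrite /W ctmxM -mulmxA (mulmxA (ctmx U)) hUU mul1mx /E.
  by rewrite ctmx_col ctmx1 ctmx0 mul_row_col mul1mx mul0mx addr0.
have hV : V *m ctmx V = 1%:M.
  rewrite /V ctmxM ctmxK -mulmxA (mulmxA (ctmx U)) hUU mul1mx /Mr ctmx_row mul_row_col.
  exact: hKL.
have eA : A = W *m P *m V by rewrite /A blk /W /V !mulmxA.
have eB : B = W *m Sigma *m V by rewrite hB blk /W /V !mulmxA.
clearbody W V.
have hSu : Sigma \in unitmx.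
  by rewrite unitmxE det_diag unitfE; apply/prodf_neq0 => i _; exact: lt0r_neq0.
set S := invmx Sigma.
have hS : ctmx S = S.
  rewrite /S ctmxV; congr invmx; rewrite /Sigma /ctmx tr_diag_mx map_diag_mx.
  by congr diag_mx; apply/matrixP => i j; rewrite mxE (ord1 i); exact: (conj_Creal (gtr0_real (hd j))).
have penS : penrose Sigma S.
  split.
  - by rewrite mulmxV // mul1mx.
  - by rewrite mulVmx // mul1mx.
  - by rewrite mulmxV // ctmx1.
  - by rewrite mulVmx // ctmx1.
have eMA : mpinv A = ctmx V *m (S *m T) *m ctmx W.
  by rewrite eA; apply: mpinvE; apply: pen_conj => //; apply: penrose_sym; exact: mpinvP.
have eMB : mpinv B = ctmx V *m S *m ctmx W.
  by rewrite eB; apply: mpinvE; exact: pen_conj.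
rewrite eMA eMB /diamond_le.
have c1 : Defs.colsub (ctmx V *m (S *m T) *m ctmx W) (ctmx V *m S *m ctmx W).
  rewrite /Defs.colsub.
  have -> : ctmx V *m (S *m T) *m ctmx W
      = ctmx V *m S *m ctmx W *m (W *m Sigma *m (S *m T) *m ctmx W).
    by rewrite -!mulmxA (mulmxA (ctmx W)) hW mul1mx (mulmxA S Sigma) mulVmx // mul1mx.
  by rewrite trmx_mul submxMl.
have c2 : Defs.colsub (ctmx (ctmx V *m (S *m T) *m ctmx W)) (ctmx (ctmx V *m S *m ctmx W)).
  rewrite /Defs.colsub.
  have -> : ctmx V *m (S *m T) *m ctmx W
      = ctmx V *m (S *m T) *m Sigma *m V *m (ctmx V *m S *m ctmx W).
    by rewrite -!mulmxA (mulmxA V) hV mul1mx (mulmxA Sigma S) mulmxV // mul1mx.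
  by rewrite ctmxM trmx_mul submxMl.
have key Z1 Z2 : ctmx V *m Z1 *m ctmx W = ctmx V *m Z2 *m ctmx W -> Z1 = Z2.
  move=> h; have := congr1 (fun M => V *m M *m W) h.
  by rewrite /= !mulmxA hV !mul1mx -!mulmxA hW !mulmx1.
have e3 : ctmx V *m (S *m T) *m ctmx W *m ctmx (ctmx V *m S *m ctmx W) *m
          (ctmx V *m (S *m T) *m ctmx W)
        = ctmx V *m (S *m T *m S *m S *m T) *m ctmx W.
  by rewrite !ctmxM !ctmxK hS -!mulmxA (mulmxA (ctmx W)) hW mul1mx (mulmxA V) hV mul1mx.
have e4 : ctmx V *m (S *m T) *m ctmx W *m ctmx (ctmx V *m (S *m T) *m ctmx W) *m
          (ctmx V *m (S *m T) *m ctmx W)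
        = ctmx V *m (S *m T *m ctmx T *m S *m S *m T) *m ctmx W.
  by rewrite !ctmxM !ctmxK hS -!mulmxA (mulmxA (ctmx W)) hW mul1mx (mulmxA V) hV mul1mx.
split.
- case=> _ _; rewrite e3 e4 => /key h.
  have := congr1 (mulmx Sigma) h; rewrite -!mulmxA !mulKVmx // !mulmxA => h'.
  by rewrite mulmxBr mulmx1 !mulmxBl ?mulmxA h' subrr.
- move=> h; split => //; rewrite e3 e4; congr (_ *m _ *m _).
  move: h; rewrite mulmxBr mulmx1 !mulmxBl ?mulmxA => /eqP; rewrite subr_eq0 => /eqP h.
  have : S *m (T *m S *m S *m T) = S *m (T *m ctmx T *m S *m S *m T) by rewrite h.
  by rewrite !mulmxA.
Qed.
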